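(* Let $C$ be a binary linear $[n,k]$ code with minimum distance $d(C)$ and covering radius $\rho(C)$, let $G$ be a generator matrix of $C$ with rows $\mathbf r_1,\dots,\mathbf r_k$, let $\mathbf x=(x_1,\dots,x_n)\in\mathbb F_2^n$ and $y_i=\mathbf x\cdot\mathbf r_i$. Let $C_i$ ($i=1,2,3$) be the code obtained by any of Constructions I–IV, namely: $C_1$ (when $\mathbf x\cdot\mathbf x=1$) and $C_3$ (when $\mathbf x\cdot\mathbf x=0$) generated by the matrix with first row $(1,0,x_1,\dots,x_n)$ and further rows $(y_i,y_i,\mathbf r_i)$, $1\le i\le k$; and $C_2$ (when $\mathbf x\cdot\mathbf x=0$) generated by the matrix with first row $(1,1,x_1,\dots,x_n)$ and further rows $(y_i,0,\mathbf r_i)$, $1\le i\le k$. Then \[ \min\{d(C),\mathrm{weight}(\mathbf x+C)+1\}\le d(C_i)\le \rho(C)+2 . \]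
   Context: $\mathrm{weight}(\mathbf x+C)$ denotes the minimum Hamming weight of a vector in the coset $\mathbf x+C$. The covering radius $\rho(C)$ is the maximum over $\mathbf u\in\mathbb F_2^n$ of the Hamming distance from $\mathbf u$ to $C$. Dot products are standard over $\mathbb F_2$. *)

(* Defs.v *)
From HB Require Import structures.
From mathcomp Require Import all_boot all_order all_algebra.
Set Implicit Arguments. Unset Strict Implicit. Unset Printing Implicit Defensive.
Import GRing.Theory.
Local Open Scope ring_scope.

Definition wt n (v : 'rV['F_2]_n) : nat := #|[set i | v 0 i != 0]|.

Definition dot n (u v : 'rV['F_2]_n) : 'F_2 := (u *m v^T) 0 0.

Definition code k n (G : 'M['F_2]_(k, n)) : {set 'rV['F_2]_n} :=
  [set v | (v <= G)%MS].

(* minimum distance: least weight of a nonzero codeword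
   (the default value n is only reached if the code is {0}) *)
Definition mindist n (C : {set 'rV['F_2]_n}) : nat :=
  \big[minn/n]_(c in C | c != 0) wt c.

Definition coset_wt n (x : 'rV['F_2]_n) (C : {set 'rV['F_2]_n}) : nat :=
  \big[minn/n]_(c in C) wt (x + c).

Definition dist_to n (u : 'rV['F_2]_n) (C : {set 'rV['F_2]_n}) : nat :=
  \big[minn/n]_(c in C) wt (u - c).
Definition covering_radius n (C : {set 'rV['F_2]_n}) : nat :=
  \max_(u : 'rV['F_2]_n) dist_to u C.

Definition ext n (a b : 'F_2) (v : 'rV['F_2]_n) : 'rV['F_2]_(2 + n) :=
  row_mx (\row_(j < 2) if j == 0%N :> nat then a else b) v.

Definition G13 k n (G : 'M['F_2]_(k, n)) (x : 'rV['F_2]_n) : 'M['F_2]_(1 + k, 2 + n) :=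
  col_mx (ext 1 0 x)
         (\matrix_(i < k) ext (dot x (row i G)) (dot x (row i G)) (row i G)).

Definition G2 k n (G : 'M['F_2]_(k, n)) (x : 'rV['F_2]_n) : 'M['F_2]_(1 + k, 2 + n) :=
  col_mx (ext 1 1 x)
         (\matrix_(i < k) ext (dot x (row i G)) 0 (row i G)).

(* Main.v *)
Require Import Defs.
From HB Require Import structures.
From mathcomp Require Import all_boot all_order all_algebra.
Set Implicit Arguments. Unset Strict Implicit. Unset Printing Implicit Defensive.
Import GRing.Theory.
Local Open Scope ring_scope.

Lemma F2_cases (a : 'F_2) : a = 0 \/ a = 1.
Proof. case: a => [[|[|m]] Hm]; [left|right|done]; exact: val_inj. Qed.

Lemma wtE n (v : 'rV['F_2]_n) : wt v = \big[addn/0%N]_i ((v 0 i != 0) : nat).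
Proof.
rewrite /wt -sum1dep_card big_mkcond /=; apply: eq_bigr => i _.
by case: (v 0 i != 0).
Qed.

Lemma wt0 n : wt (0 : 'rV['F_2]_n) = 0%N.
Proof. by rewrite wtE big1 // => i _; rewrite mxE eqxx. Qed.

Lemma wt_ext n a b (v : 'rV['F_2]_n) :
  wt (ext a b v) = addn (addn (a != 0) (b != 0)) (wt v).
Proof.
rewrite !wtE big_split_ord /= !big_ord_recl big_ord0 /ext.
rewrite !row_mxEl !mxE /= addn0.
congr (_ + _)%N; apply: eq_bigr => i _; by rewrite row_mxEr.
Qed.

Lemma ext_add n a b a' b' (v v' : 'rV['F_2]_n) :
  ext a b v + ext a' b' v' = ext (a + a') (b + b') (v + v').
Proof.
rewrite /ext add_row_mx; congr row_mx; apply/rowP => j; rewrite !mxE.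
by case: ifP.
Qed.

Lemma ext_scale n s a b (v : 'rV['F_2]_n) :
  s *: ext a b v = ext (s * a) (s * b) (s *: v).
Proof.
rewrite /ext scale_row_mx; congr row_mx; apply/rowP => j; rewrite !mxE.
by case: ifP.
Qed.

Definition Mx n (x : 'rV['F_2]_n) (p q : 'F_2) : 'M['F_2]_(n, 2 + n) :=
  row_mx (x^T *m \row_(j < 2) (if j == 0%N :> nat then p else q)) 1%:M.

Lemma extM n (x c : 'rV['F_2]_n) p q :
  ext (dot x c * p) (dot x c * q) c = c *m Mx x p q.
Proof.
rewrite /ext /Mx mul_mx_row mulmx1 mulmxA; congr row_mx; apply/rowP => j.
rewrite !mxE big_ord1 /dot.
have -> : (c *m x^T) 0 0 = (x *m c^T) 0 0.
  by rewrite -[c *m x^T]trmxK trmx_mul trmxK mxE.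
by rewrite !mxE; case: ifP.
Qed.

Lemma G13E k n (G : 'M['F_2]_(k, n)) x : G13 G x = col_mx (ext 1 0 x) (G *m Mx x 1 1).
Proof.
rewrite /G13; congr col_mx; apply/row_matrixP => i.
by rewrite rowK row_mul -extM !mulr1.
Qed.

Lemma G2E k n (G : 'M['F_2]_(k, n)) x : G2 G x = col_mx (ext 1 1 x) (G *m Mx x 1 0).
Proof.
rewrite /G2; congr col_mx; apply/row_matrixP => i.
by rewrite rowK row_mul -extM mulr1 mulr0.
Qed.

Lemma code_inv k n (G : 'M['F_2]_(k, n)) (A : 'rV_(2 + n)) M v :
  v \in code (col_mx A (G *m M)) ->
  exists a c, c \in code G /\ v = a *: A + c *m M.
Proof.
rewrite /code inE => /submxP [u ->].
rewrite -[u]hsubmxK mul_row_col.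
exists (lsubmx u 0 0), (rsubmx u *m G); split.
  by rewrite /code inE submxMl.
by rewrite {1}(mx11_scalar (lsubmx u)) mul_scalar_mx mulmxA.
Qed.

Lemma code_in k n (G : 'M['F_2]_(k, n)) (A : 'rV_(2 + n)) M a c :
  c \in code G -> a *: A + c *m M \in code (col_mx A (G *m M)).
Proof.
rewrite /code !inE => /submxP [w ->]; apply/submxP; exists (row_mx a%:M w).
by rewrite mul_row_col mul_scalar_mx mulmxA.
Qed.

Lemma dotx0 n (x : 'rV['F_2]_n) : dot x 0 = 0.
Proof. by rewrite /dot trmx0 mulmx0 mxE. Qed.

Lemma bigmin_le (T : finType) (P : pred T) (F : T -> nat) d i :
  P i -> (\big[minn/d]_(j | P j) F j <= F i)%N.
Proof.
move=> Pi; rewrite -big_filter.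
have : i \in [seq j <- index_enum T | P j] by rewrite mem_filter Pi mem_index_enum.
elim: [seq j <- index_enum T | P j] => //= y s IH.
rewrite in_cons big_cons => /orP [/eqP <-|/IH h]; first exact: geq_minl.
exact: leq_trans (geq_minr _ _) h.
Qed.

Lemma bigmin_led (T : finType) (P : pred T) (F : T -> nat) d :
  (\big[minn/d]_(j | P j) F j <= d)%N.
Proof.
rewrite -big_filter; elim: [seq j <- index_enum T | P j] => [|y s IH].
  by rewrite big_nil.
by rewrite big_cons; exact: leq_trans (geq_minr _ _) IH.
Qed.

Lemma minn_ind (Q : nat -> Prop) a b : Q a -> Q b -> Q (minn a b).
Proof.
by move=> Qa Qb; case: leqP.
Qed.

Lemma neg_F2 (a : 'F_2) : - a = a.
Proof. case: (F2_cases a) => ->; first by rewrite oppr0. exact: val_inj. Qed.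

Lemma coset_le n (x : 'rV['F_2]_n) C : (coset_wt x C <= covering_radius C)%N.
Proof.
have -> : coset_wt x C = dist_to x C.
  apply: eq_bigr => c _; congr wt; apply/rowP => j; rewrite !mxE.
  by rewrite neg_F2.
exact: leq_bigmax.
Qed.

Lemma vecE n (x c : 'rV['F_2]_n) p0 q0 p q a :
  a *: ext p0 q0 x + c *m Mx x p q =
  ext (a * p0 + dot x c * p) (a * q0 + dot x c * q) (a *: x + c).
Proof. by rewrite ext_scale -extM ext_add. Qed.

Lemma main_gen k n (G : 'M['F_2]_(k, n)) x p0 q0 p q :
  (forall d : 'F_2, (p0 + d * p != 0) || (q0 + d * q != 0)) ->
  let C := code G in
  (minn (mindist C) (coset_wt x C).+1 <=
    mindist (code (col_mx (ext p0 q0 x) (G *m Mx x p q))) <=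
    (covering_radius C).+2)%N.
Proof.
move=> H /=; apply/andP; split.
  rewrite /mindist; apply: (big_ind (fun y => minn (mindist (code G)) (coset_wt x (code G)).+1 <= y)%N).
  - rewrite geq_min; apply/orP; right.
    by rewrite add2n ltnS ltnW // ltnS bigmin_led.
  - by move=> a b Ha Hb; rewrite leq_min Ha Hb.
  move=> v /andP [Hv].
  have [a [c [Hc ->]]] := code_inv Hv.
  rewrite vecE wt_ext.
  case: (F2_cases a) => -> Hnz.
    rewrite !mul0r !add0r scale0r add0r.
    have cnz : c != 0.
      apply: contra Hnz => /eqP ce; rewrite ce dotx0 !mul0r.
      rewrite !addr0 scale0r /ext; apply/eqP.
      have -> : (\row_(j < 2) if j == 0%N :> nat then (0 : 'F_2) else 0) = 0.
        by apply/rowP => j; rewrite !mxE; case: ifP.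
      exact: row_mx0.
    rewrite geq_min; apply/orP; left.
    apply: leq_trans (leq_addl _ _).
    by apply: bigmin_le; rewrite Hc cnz.
  rewrite geq_min; apply/orP; right.
  rewrite !mul1r scale1r.
  apply: (@leq_trans (wt (x + c)).+1); first by rewrite ltnS; exact: bigmin_le.
  rewrite -add1n leq_add2r.
  by have := H (dot x c); case: (p0 + _ != 0); case: (q0 + _ != 0).
set N := code _.
apply: (@leq_trans (coset_wt x (code G)).+2); last by rewrite !ltnS coset_le.
rewrite /coset_wt; apply: (big_ind (fun y => mindist N <= y.+2)%N).
- exact: (@bigmin_led _ _ _ (2 + n)%N).
- exact: minn_ind.
move=> c Hc.
have Hw := code_in (ext p0 q0 x) (Mx x p q) 1 Hc.
have Hwt : (0 < wt (1 *: ext p0 q0 x + c *m Mx x p q) <= (wt (x + c)).+2)%N.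
  rewrite vecE wt_ext !mul1r scale1r.
  have := H (dot x c); case: (p0 + _ != 0); case: (q0 + _ != 0) => //= _.
case/andP: Hwt => H1 H2.
apply: leq_trans H2; apply: bigmin_le; rewrite Hw /=.
by apply: contraTneq H1 => ->; rewrite wt0.
Qed.

Theorem corollary1 (n k : nat) (G : 'M['F_2]_(k, n)) (x : 'rV['F_2]_n) :
  (0 < k)%N -> row_free G ->
  let C := code G in
  let lo := minn (mindist C) (coset_wt x C).+1 in
  let hi := (covering_radius C).+2 in
  (dot x x = 1 ->
     (lo <= mindist (code (G13 G x)) <= hi)%N) /\
  (dot x x = 0 ->
     (lo <= mindist (code (G2 G x)) <= hi)%N) /\
  (dot x x = 0 ->
     (lo <= mindist (code (G13 G x)) <= hi)%N).
Proof.
move=> _ _ /=.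
have h13 := @main_gen k n G x 1 0 1 1.
have h2 := @main_gen k n G x 1 1 1 0.
rewrite G13E G2E; split; [|split] => _.
- by apply: h13 => d; case: (F2_cases d) => ->.
- by apply: h2 => d; case: (F2_cases d) => ->.
- by apply: h13 => d; case: (F2_cases d) => ->.
Qed.
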